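(* Let $v_0\in\mathbb{R}^n$ be a unit vector, $\tau>0$, $\epsilon\ge 0$, and let $A\in\mathbb{R}^{n^2\times n}$. Let $T=\tau(v_0\otimes v_0)v_0^T+A\in\mathbb{R}^{n^2\times n}$. Suppose $A^TA=C\cdot\mathrm{Id}_{n\times n}+E$ for some real $C\ge 0$ and a matrix $E$ with $\|E\|\le\epsilon\tau^2$, and that $\|A^T(v_0\otimes v_0)\|\le\epsilon\tau$. Then every unit top eigenvector $u$ of $T^TT$ satisfies $\langle u,v_0\rangle^2\ge 1-O(\epsilon)$.
   Context: $T$ is the $n^2\times n$ unfolding of the tensor $\tau v_0^{\otimes3}+\mathbf{A}$, with $T[(j,k),i]=\mathbf{T}_{ijk}$; norms are operator norms. *)

(* Defs.v *)
From HB Require Import structures.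
From mathcomp Require Import all_boot all_order all_algebra.
Set Implicit Arguments. Unset Strict Implicit. Unset Printing Implicit Defensive.
Import Order.TTheory GRing.Theory Num.Theory.
Local Open Scope ring_scope.

Definition vnorm (R : rcfType) (m : nat) (v : 'cV[R]_m) : R :=
  Num.sqrt (\sum_(i < m) v i 0 ^+ 2).

Definition vdot (R : rcfType) (m : nat) (u v : 'cV[R]_m) : R :=
  (u^T *m v) 0 0.

Definition opnorm_le (R : rcfType) (m k : nat) (M : 'M[R]_(m, k)) (c : R) : Prop :=
  forall x : 'cV[R]_k, vnorm (M *m x) <= c * vnorm x.

(* v (x) v in R^{n^2}, entry at index of (j,k) is v_j v_k. *)
Definition kron2 (R : rcfType) (n : nat) (v : 'cV[R]_n) : 'cV[R]_(n * n) :=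
  (mxvec (v *m v^T))^T.

Definition top_eigenvector (R : rcfType) (n : nat) (M : 'M[R]_n) (u : 'cV[R]_n) : Prop :=
  exists lam : R,
    [/\ u != 0, M *m u = lam *: u &
        forall (mu : R) (w : 'cV[R]_n), w != 0 -> M *m w = mu *: w -> mu <= lam].

(* Main.v *)
Require Import Defs.
From HB Require Import structures.
From mathcomp Require Import all_boot all_order all_algebra.
From mathcomp Require Import ring lra.
From mathcomp Require Import complex spectral sesquilinear.
Import Order.TTheory GRing.Theory Num.Theory.
Local Open Scope ring_scope.
Set Implicit Arguments. Unset Strict Implicit.

Lemma vdotE (R : rcfType) m (u v : 'cV[R]_m) : vdot u v = \sum_i u i 0 * v i 0.
Proof. by rewrite /vdot mxE; apply: eq_bigr => i _; rewrite mxE. Qed.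

Lemma vdotC (R : rcfType) m (u v : 'cV[R]_m) : vdot u v = vdot v u.
Proof. by rewrite !vdotE; apply: eq_bigr => i _; rewrite mulrC. Qed.

Lemma vdotDr (R : rcfType) m (u v w : 'cV[R]_m) : vdot u (v + w) = vdot u v + vdot u w.
Proof. by rewrite !vdotE -big_split; apply: eq_bigr => i _; rewrite mxE mulrDr. Qed.

Lemma vdotDl (R : rcfType) m (u v w : 'cV[R]_m) : vdot (v + w) u = vdot v u + vdot w u.
Proof. by rewrite vdotC vdotDr !(vdotC u). Qed.

Lemma vdotZr (R : rcfType) m (a : R) (u v : 'cV[R]_m) : vdot u (a *: v) = a * vdot u v.
Proof. by rewrite !vdotE mulr_sumr; apply: eq_bigr => i _; rewrite mxE mulrCA. Qed.

Lemma vdotZl (R : rcfType) m (a : R) (u v : 'cV[R]_m) : vdot (a *: v) u = a * vdot v u.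
Proof. by rewrite vdotC vdotZr vdotC. Qed.

Lemma vdotNl (R : rcfType) m (u v : 'cV[R]_m) : vdot (- v) u = - vdot v u.
Proof. by rewrite -scaleN1r vdotZl mulN1r. Qed.

Lemma vdotNr (R : rcfType) m (u v : 'cV[R]_m) : vdot u (- v) = - vdot u v.
Proof. by rewrite -scaleN1r vdotZr mulN1r. Qed.

Lemma vdot_mul (R : rcfType) m k (A : 'M[R]_(m, k)) x y : vdot (A *m x) y = vdot x (A^T *m y).
Proof. by rewrite /vdot trmx_mul mulmxA. Qed.

Lemma vdot_ge0 (R : rcfType) m (u : 'cV[R]_m) : 0 <= vdot u u.
Proof. by rewrite vdotE sumr_ge0 // => i _; rewrite -expr2 sqr_ge0. Qed.

Lemma vnormE (R : rcfType) m (u : 'cV[R]_m) : vnorm u = Num.sqrt (vdot u u).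
Proof. by rewrite /vnorm vdotE; congr Num.sqrt; apply: eq_bigr => i _; rewrite expr2. Qed.

Lemma vnorm_ge0 (R : rcfType) m (u : 'cV[R]_m) : 0 <= vnorm u.
Proof. by rewrite vnormE sqrtr_ge0. Qed.

Lemma vnorm1 (R : rcfType) m (u : 'cV[R]_m) : vnorm u = 1 -> vdot u u = 1.
Proof.
rewrite vnormE => h; have := sqr_sqrtr (vdot_ge0 u); by rewrite h expr1n.
Qed.

Lemma CS1 (R : rcfType) m (x y : 'cV[R]_m) : vdot x x = 1 -> `|vdot x y| <= vnorm y.
Proof.
move=> hx; set c := vdot x y.
have h := vdot_ge0 (y - c *: x).
rewrite vdotDl !vdotDr !vdotNl !vdotNr !vdotZl !vdotZr hx (vdotC y x) -/c in h.
rewrite vnormE -sqrtr_sqr ler_sqrt ?vdot_ge0 //.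
rewrite expr2; nra.
Qed.

Lemma sum_mxvec (R : rcfType) m n (F : 'I_(m * n) -> R) :
  \sum_k F k = \sum_i \sum_j F (mxvec_index i j).
Proof.
rewrite (reindex _ (curry_mxvec_bij m n)) /=.
by rewrite pair_bigA /=; apply: eq_bigr => -[i j].
Qed.

Lemma vdot_kron2 (R : rcfType) n (v : 'cV[R]_n) :
  vdot (kron2 v) (kron2 v) = vdot v v ^+ 2.
Proof.
rewrite vdotE sum_mxvec expr2 vdotE mulr_suml; apply: eq_bigr => i _.
rewrite mulr_sumr; apply: eq_bigr => j _.
rewrite /kron2 !mxE mxvecE !mxE big_ord1 !mxE; ring.
Qed.

Lemma quadT (R : rcfType) n (v0 x : 'cV[R]_n) (tau C : R) (A : 'M[R]_(n * n, n)) E :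
 A^T *m A = C%:M + E -> vdot v0 v0 = 1 ->
 vdot x (((tau *: (kron2 v0 *m v0^T) + A)^T *m (tau *: (kron2 v0 *m v0^T) + A)) *m x) = tau ^+ 2 * (vdot v0 x) ^+ 2
   + 2 * tau * vdot v0 x * vdot (A^T *m kron2 v0) x + C * vdot x x + vdot x (E *m x).
Proof.
move=> hA hv; set T := tau *: (kron2 v0 *m v0^T) + A.
rewrite -mulmxA -vdot_mul.
have e1 : v0^T *m x = (vdot v0 x)%:M.
  by apply/matrixP => i j; rewrite !ord1 [RHS]mxE eqxx mulr1n.
have Tx : T *m x = (tau * vdot v0 x) *: kron2 v0 + A *m x.
  by rewrite /T mulmxDl -scalemxAl -mulmxA e1 mul_mx_scalar scalerA.
have e2 : vdot (kron2 v0) (A *m x) = vdot (A^T *m kron2 v0) x.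
  by rewrite vdot_mul trmxK.
have e3 : vdot (A *m x) (A *m x) = C * vdot x x + vdot x (E *m x).
  by rewrite vdot_mul mulmxA hA mulmxDl mul_scalar_mx vdotDr vdotZr.
rewrite Tx vdotDl !vdotDr !vdotZl !vdotZr vdot_kron2 hv e2 (vdotC (A *m x)) e2 e3.
ring.
Qed.

Section SpecSec.
Local Open Scope sesquilinear_scope.
Lemma exmax (R : realDomainType) n (f : 'I_n.+1 -> R) : exists k, forall i, f i <= f k.
Proof.
case: (@arg_maxP _ _ _ ord0 xpredT f erefl) => k _ H.
by exists k => i; apply: H.
Qed.

Section Spec.
Variable R : rcfType.
Local Notation C := (R[i]).
Local Notation toC := (real_complex R).

Lemma conj_toC (r : R) : (toC r)^* = toC r.
Proof. by apply/CrealP/complex_realP; exists r. Qed.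

Lemma Re_sum I (r : seq I) (P : pred I) (F : I -> C) :
  complex.Re (\sum_(i <- r | P i) F i) = \sum_(i <- r | P i) complex.Re (F i).
Proof.
by apply: (big_morph (@complex.Re R)) => [[a b] [c d]|].
Qed.

Lemma Im_sum I (r : seq I) (P : pred I) (F : I -> C) :
  complex.Im (\sum_(i <- r | P i) F i) = \sum_(i <- r | P i) complex.Im (F i).
Proof.
by apply: (big_morph (@complex.Im R)) => [[a b] [c d]|].
Qed.

Lemma Re_mulR (r : R) (z : C) : complex.Re (toC r * z) = r * complex.Re z.
Proof. by case: z => a b /=; rewrite mul0r subr0. Qed.

Lemma Im_mulR (r : R) (z : C) : complex.Im (toC r * z) = r * complex.Im z.
Proof. by case: z => a b /=; rewrite mul0r addr0. Qed.

Lemma sym_top n (S : 'M[R]_n.+1) (x : 'cV[R]_n.+1) :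
  S^T = S -> (x^T *m x) 0 0 = 1 ->
  exists mu (w : 'cV[R]_n.+1), [/\ w != 0, S *m w = mu *: w & (x^T *m (S *m x)) 0 0 <= mu].
Proof.
move=> SS hx.
pose Sc := map_mx toC S; have ScE : Sc = map_mx toC S by [].
clearbody Sc.
have Sh : Sc \is hermsymmx.
  apply/is_hermitianmxP; rewrite expr0 scale1r ScE; apply/matrixP => i j.
  have := congr1 (fun M : 'M[R]_n.+1 => M i j) SS; rewrite !mxE conj_toC => ->; by [].
have [P [d [Pu dreal Seq]]] : exists P d, [/\ P \is unitarymx, d \is a realmx &
     Sc = invmx P *m diag_mx d *m P].
  exists (spectralmx Sc), (spectral_diag Sc); split.
  - exact: spectral_unitarymx.
  - exact: hermitian_spectral_diag_real.
  - exact/orthomx_spectralP/hermitian_normalmx.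
have PPt : P *m P^t* = 1%:M by apply/unitarymxP.
have PtP := mulmx1C PPt.
have dR i : d 0 i = toC (complex.Re (d 0 i)).
  by rewrite RRe_real //; exact: (mxOverP dreal 0 i).
have [k kmax] := @exmax R n (fun i => complex.Re (d 0 i)).
set dk := complex.Re (d 0 k).
have Hq : (x^T *m (S *m x)) 0 0 <= dk.
  rewrite -lecR.
  set xc := map_mx toC x.
  have E1 : toC ((x^T *m (S *m x)) 0 0) = (xc^T *m (Sc *m xc)) 0 0.
    by rewrite ScE /xc map_trmx -!map_mxM [RHS]mxE.
  have E2 : 1 = (xc^T *m xc) 0 0.
    by rewrite /xc map_trmx -map_mxM [RHS]mxE hx rmorph1.
  have xcc : xc ^T ^ (@Num.conj _) = xc^T by apply/matrixP => i j; rewrite !mxE conj_toC.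
  have Ey : xc^T *m P^t* = (P *m xc)^T ^ (@Num.conj _) by rewrite trmx_mul map_mxM xcc.
  set y := P *m xc in Ey.
  have E1' : (xc^T *m (Sc *m xc)) 0 0 = \sum_i ((y i 0)^* * d 0 i) * y i 0.
    rewrite Seq invmx_unitary // !mulmxA Ey -mulmxA mul_mx_diag mxE.
    by apply: eq_bigr => i _; rewrite !mxE.
  have E2' : (xc^T *m xc) 0 0 = \sum_i (y i 0)^* * y i 0.
    rewrite -[xc^T]mulmx1 -PtP !mulmxA Ey -mulmxA mxE.
    by apply: eq_bigr => i _; rewrite !mxE.
  rewrite E1 E1' -[toC dk]mulr1 E2 E2' mulr_sumr.
  apply: ler_sum => i _.
  rewrite mulrAC [toC dk * _]mulrC; apply: ler_wpM2l; first by rewrite mulrC mul_conjC_ge0.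
  rewrite (dR i) lecR; exact: kmax.
pose e : 'cV[C]_n.+1 := delta_mx k 0.
pose z := P^t* *m e.
have Sz : Sc *m z = d 0 k *: z.
  have De : diag_mx d *m e = d 0 k *: e.
    apply/matrixP => i j; rewrite mul_diag_mx !mxE.
    by case: (eqVneq i k) => [->|_]; rewrite ?mulr0 ?mulr1.
  rewrite Seq invmx_unitary // /z -!mulmxA (mulmxA P) PPt mul1mx De.
  by rewrite scalemxAr.
have znz : z != 0.
  apply/eqP => z0; have : P *m z = e by rewrite /z mulmxA PPt mul1mx.
  rewrite z0 mulmx0 => /matrixP/(_ k 0); rewrite !mxE !eqxx /= => /eqP.
  by rewrite eq_sym oner_eq0.
rewrite ScE in Sz; clearbody z.
pose wr := map_mx (@complex.Re R) z.
pose wi := map_mx (@complex.Im R) z.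
have Swr : S *m wr = dk *: wr.
  apply/matrixP => i j; rewrite !mxE.
  have := congr1 (fun M : 'cV[C]_n.+1 => complex.Re (M i j)) Sz.
  rewrite /= !mxE Re_sum (dR k) Re_mulR => <-.
  by apply: eq_bigr => l _; rewrite !mxE Re_mulR.
have Swi : S *m wi = dk *: wi.
  apply/matrixP => i j; rewrite !mxE.
  have := congr1 (fun M : 'cV[C]_n.+1 => complex.Im (M i j)) Sz.
  rewrite /= !mxE Im_sum (dR k) Im_mulR => <-.
  by apply: eq_bigr => l _; rewrite !mxE Im_mulR.
have [/eqP wr0|wrn] := boolP (wr == 0); last by exists dk, wr.
exists dk, wi; split => //.
apply/eqP => wi0; move/eqP: znz; apply; apply/matrixP => i j.
have := congr1 (fun M : 'cV[R]_n.+1 => M i j) wr0.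
have := congr1 (fun M : 'cV[R]_n.+1 => M i j) wi0.
rewrite !mxE; case: (z i j) => a b /= -> ->; by [].
Qed.

End Spec.
End SpecSec.

Lemma sym_top' (R : rcfType) n (S : 'M[R]_n) (x : 'cV[R]_n) : S^T = S -> vdot x x = 1 ->
  exists mu (w : 'cV[R]_n), [/\ w != 0, S *m w = mu *: w & vdot x (S *m x) <= mu].
Proof.
case: n S x => [|n] S x SS hx.
  by move: hx; rewrite vdotE big_ord0 => /eqP; rewrite eq_sym oner_eq0.
exact: sym_top.
Qed.

Theorem mainTheorem9 :
  exists K : nat,
  forall (R : rcfType) (n : nat) (v0 : 'cV[R]_n) (tau eps C : R)
         (A : 'M[R]_(n * n, n)) (E : 'M[R]_n),
    vnorm v0 = 1 -> 0 < tau -> 0 <= eps -> 0 <= C ->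
    A^T *m A = C%:M + E ->
    opnorm_le E (eps * tau ^+ 2) ->
    vnorm (A^T *m kron2 v0) <= eps * tau ->
    let T := tau *: (kron2 v0 *m v0^T) + A in
    forall u : 'cV[R]_n,
      vnorm u = 1 -> top_eigenvector (T^T *m T) u ->
      1 - K%:R * eps <= vdot u v0 ^+ 2.
Proof.
exists 6%N => R n v0 tau eps C A E hv0 htau heps hC hA hE hw T u hu [lam [unz Mu top]].
have hv := vnorm1 hv0; have hu1 := vnorm1 hu.
have MS : (T^T *m T)^T = T^T *m T by rewrite trmx_mul trmxK.
have [mu [w [wnz Mw hq]]] := sym_top' MS hv.
have mulam := top mu w wnz Mw.
have lamQ : vdot u ((T^T *m T) *m u) = lam by rewrite Mu vdotZr hu1 mulr1.
rewrite /T !(@quadT R n v0 _ tau C A E hA hv) in lamQ hq; rewrite hv hu1 in lamQ hq.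
set w0 := A^T *m kron2 v0 in lamQ hq hw.
set c := vdot v0 u in lamQ.
have b1 : `|c| <= 1 by rewrite -hu; exact: CS1.
have b2 : `|vdot w0 u| <= eps * tau by rewrite vdotC; apply: le_trans hw; exact: CS1.
have b3 : `|vdot w0 v0| <= eps * tau by rewrite vdotC; apply: le_trans hw; exact: CS1.
have b4 : `|vdot u (E *m u)| <= eps * tau ^+ 2.
  apply: le_trans (CS1 _ hu1) _; apply: le_trans (hE u) _; by rewrite hu mulr1.
have b5 : `|vdot v0 (E *m v0)| <= eps * tau ^+ 2.
  apply: le_trans (CS1 _ hv) _; apply: le_trans (hE v0) _; by rewrite hv0 mulr1.
have cs : c * vdot w0 u <= eps * tau.
  apply: le_trans (ler_norm _) _; rewrite normrM -[eps * tau]mul1r.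
  by apply: ler_pM.
move: b3 b4 b5; rewrite !ler_norml => /andP[b3 _] /andP[_ b4] /andP[b5 _].
have t2 : 0 < tau ^+ 2 by rewrite exprn_gt0.
have key : tau ^+ 2 * (1 - 6%:R * eps - c ^+ 2) <= 0.
  have h1 : tau * (c * vdot w0 u) <= tau * (eps * tau) by rewrite ler_pM2l.
  have h2 : tau * (- (eps * tau)) <= tau * vdot w0 v0 by rewrite ler_pM2l.
  have h3 : mu <= lam := mulam.
  rewrite expr1n in hq; nra.
rewrite pmulr_rle0 // in key; rewrite vdotC -/c; lra.
Qed.
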